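(* Let $\mathcal H=(M,n,\mathcal R)$ be a BMS, let $S\subseteq\mathbb R^n$ be a bounded convex polytope, and let $x_0$ be a point in the interior of $S$. Then the scheduler has a winning strategy from $x_0$ in the schedulability game with safety set $S$ if and only if $\mathcal H$ is safe.
   Context: A multi-mode system is a tuple $\mathcal H=(M,n,\mathcal R)$ with $M$ a finite nonempty set of modes, $n\ge1$ variables, and $\mathcal R:M\to 2^{\mathbb R^n}$ giving nonempty rate sets; it is a BMS if each $\mathcal R(m)$ is a bounded convex polytope, and a CMS if each $\mathcal R(m)$ is a singleton. An instance of $(M,n,\mathcal R)$ is a CMS $(M,n,R)$ with $R(m)\in\mathcal R(m)$ for all $m$. A CMS $(M,n,R)$ is safe if there are $t_m\ge0$ with $\sum_m t_m=1$ and $\sum_m t_mR(m)=\vec0$. $\mathrm{Ext}(\mathcal H)=(M,n,\mathcal R')$ where $\mathcal R'(m)$ is the vertex set of $\mathcal R(m)$; $\mathcal H$ is safe if every instance of $\mathrm{Ext}(\mathcal H)$ is safe. The schedulability game from $x_0$: in round $i\ge1$ the scheduler chooses $(m_i,t_i)\in M\times\mathbb R_{>0}$, the environment chooses $r_i\in\mathcal R(m_i)$, and $x_i=x_{i-1}+t_ir_i$. Scheduler strategies map finite histories $\langle x_0,(m_1,t_1),r_1,x_1,\dots,x_k\rangle$ to timed moves; environment strategies map a history and the current timed move $(m,t)$ to a rate in $\mathcal R(m)$. A run is $S$-safe if $x_i\in S$ and $x_i+tr_{i+1}\in S$ for all $i\ge0$, $t\in[0,t_{i+1}]$, and non-Zeno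 if $\sum_it_i=\infty$. A scheduler strategy is winning if against every environment strategy the run is $S$-safe and non-Zeno. *)

(* Defs.v *)
From Stdlib Require Import Reals.
From mathcomp Require Import all_boot.
Set Implicit Arguments. Unset Strict Implicit. Unset Printing Implicit Defensive.
Local Open Scope R_scope.

Definition vec (n : nat) := 'I_n -> R.

Definition conv_hull (n k : nat) (p : 'I_k -> vec n) (y : vec n) : Prop :=
  exists w : 'I_k -> R,
    (forall j, 0 <= w j) /\
    \big[Rplus/R0]_(j : 'I_k) w j = 1 /\
    (forall i, y i = \big[Rplus/R0]_(j : 'I_k) (w j * p j i)).

Definition is_polytope (n : nat) (P : vec n -> Prop) : Prop :=
  exists (k : nat) (p : 'I_k -> vec n),
    (0 < k)%N /\ (forall y, P y <-> conv_hull p y).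

Definition is_vertex (n : nat) (P : vec n -> Prop) (x : vec n) : Prop :=
  P x /\
  forall (y z : vec n) (l : R), P y -> P z -> 0 < l < 1 ->
    (forall i, x i = l * y i + (1 - l) * z i) -> (forall i, y i = z i).

Definition in_interior (n : nat) (S : vec n -> Prop) (x : vec n) : Prop :=
  exists eps, 0 < eps /\ forall y : vec n, (forall i, Rabs (y i - x i) < eps) -> S y.

Definition is_BMS (M : finType) (n : nat) (Rates : M -> vec n -> Prop) : Prop :=
  (exists m : M, True) /\ (0 < n)%N /\ forall m, is_polytope (Rates m).

Definition safe_CMS (M : finType) (n : nat) (Rc : M -> vec n) : Prop :=
  exists t : M -> R,
    (forall m, 0 <= t m) /\
    \big[Rplus/R0]_(m : M) t m = 1 /\
    (forall i, \big[Rplus/R0]_(m : M) (t m * Rc m i) = 0).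

(* Instances of Ext(H): choose a vertex of each rate set *)
Definition instance_of_Ext (M : finType) (n : nat) (Rates : M -> vec n -> Prop)
  (Rc : M -> vec n) : Prop := forall m, is_vertex (Rates m) (Rc m).

Definition safe_MMS (M : finType) (n : nat) (Rates : M -> vec n -> Prop) : Prop :=
  forall Rc, instance_of_Ext Rates Rc -> safe_CMS Rc.

(* A finite history <x0,(m1,t1),r1,x1,...,(mk,tk),rk,xk> is represented by x0 and
   the list of rounds (m_i,t_i,r_i); the x_i are determined by x_i = x_(i-1)+t_i r_i. *)
Definition round (M : finType) (n : nat) := (M * R * vec n)%type.
Definition history (M : finType) (n : nat) := (vec n * seq (round M n))%type.

Definition pos (M : finType) (n : nat) (x0 : vec n) (rs : seq (round M n)) : vec n :=
  fun i => x0 i + foldr (fun (rd : round M n) acc => rd.1.2 * rd.2 i + acc) R0 rs.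

Definition sched_strategy (M : finType) (n : nat) := history M n -> (M * R)%type.
Definition env_strategy (M : finType) (n : nat) := history M n -> M -> R -> vec n.

Definition valid_sched (M : finType) (n : nat) (sg : sched_strategy M n) : Prop :=
  forall h, 0 < (sg h).2.

Definition valid_env (M : finType) (n : nat) (Rates : M -> vec n -> Prop)
  (en : env_strategy M n) : Prop :=
  forall h m t, Rates m (en h m t).

Fixpoint run_rounds (M : finType) (n : nat) (x0 : vec n) (sg : sched_strategy M n)
  (en : env_strategy M n) (k : nat) : seq (round M n) :=
  match k with
  | O => [::]
  | S k' =>
      let rs := run_rounds x0 sg en k' in
      let mt := sg (x0, rs) in
      rcons rs (mt.1, mt.2, en (x0, rs) mt.1 mt.2)
  end.

(* round number i+1 of the run: (m_(i+1), t_(i+1), r_(i+1)) *)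
Definition next_round (M : finType) (n : nat) (x0 : vec n) (sg : sched_strategy M n)
  (en : env_strategy M n) (i : nat) : round M n :=
  let rs := run_rounds x0 sg en i in
  let mt := sg (x0, rs) in (mt.1, mt.2, en (x0, rs) mt.1 mt.2).

Definition run_pos (M : finType) (n : nat) (x0 : vec n) (sg : sched_strategy M n)
  (en : env_strategy M n) (i : nat) : vec n := pos x0 (run_rounds x0 sg en i).

Definition run_S_safe (M : finType) (n : nat) (S : vec n -> Prop) (x0 : vec n)
  (sg : sched_strategy M n) (en : env_strategy M n) : Prop :=
  forall i : nat,
    S (run_pos x0 sg en i) /\
    forall t, 0 <= t <= (next_round x0 sg en i).1.2 ->
      S (fun j => run_pos x0 sg en i j + t * (next_round x0 sg en i).2 j).

Definition run_non_Zeno (M : finType) (n : nat) (x0 : vec n)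
  (sg : sched_strategy M n) (en : env_strategy M n) : Prop :=
  forall B : R, exists k : nat,
    B < \big[Rplus/R0]_(i < k) (next_round x0 sg en i).1.2.

Definition winning (M : finType) (n : nat) (Rates : M -> vec n -> Prop)
  (S : vec n -> Prop) (x0 : vec n) (sg : sched_strategy M n) : Prop :=
  valid_sched sg /\
  forall en : env_strategy M n, valid_env Rates en ->
    run_S_safe S x0 sg en /\ run_non_Zeno x0 sg en.

(* Main.v *)
From HB Require Import structures.
Require Import Defs.
From Stdlib Require Import Reals Lra Psatz Classical IndefiniteDescription.
From mathcomp Require Import all_boot.
Set Implicit Arguments. Unset Strict Implicit. Unset Printing Implicit Defensive.
Local Open Scope R_scope.

Ltac clb := repeat match goal with x := _ |- _ => clearbody x end.
Ltac absb := repeat match goal with H : context [@bigop R _ R0 _ _] |- _ => revert H end;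
  repeat match goal with
 | |- context [@bigop R ?I R0 ?r ?F] => let x := fresh "S" in set x := (@bigop R I R0 r F); clearbody x
 end; intros.
Ltac lra' := clb; absb; lra.
Ltac nra' := clb; absb; nra.

Lemma Rplus_assoc' : associative Rplus. Proof. by move=> *; rewrite Rplus_assoc. Qed.
HB.instance Definition _ := Monoid.isComLaw.Build R R0 Rplus Rplus_assoc' Rplus_comm Rplus_0_l.
HB.instance Definition _ := Monoid.isMulLaw.Build R R0 Rmult Rmult_0_l Rmult_0_r.
HB.instance Definition _ := Monoid.isAddLaw.Build R Rmult Rplus Rmult_plus_distr_r Rmult_plus_distr_l.

Section Sums.
Variable I : finType.

Lemma sum_ge0P (P : pred I) (F : I -> R) :
  (forall i, P i -> 0 <= F i) -> 0 <= \big[Rplus/R0]_(i | P i) F i.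
Proof. move=> H; apply: big_ind => //; [lra | move=> *; lra]. Qed.

Lemma sum_ge0 (F : I -> R) : (forall i, 0 <= F i) -> 0 <= \big[Rplus/R0]_(i : I) F i.
Proof. by move=> H; apply: sum_ge0P. Qed.

Lemma sum_le (F G : I -> R) : (forall i, F i <= G i) ->
  \big[Rplus/R0]_(i : I) F i <= \big[Rplus/R0]_(i : I) G i.
Proof. move=> H; apply: (big_ind2 (fun x y => x <= y)) => //; [lra | move=> *; lra]. Qed.

Lemma term_le_sum (F : I -> R) j : (forall i, 0 <= F i) -> F j <= \big[Rplus/R0]_(i : I) F i.
Proof.
move=> H; rewrite (bigD1 j) //=.
have := @sum_ge0P (fun i => i != j) F (fun i _ => H i); lra.
Qed.

Lemma sum_opp (F : I -> R) : \big[Rplus/R0]_(i : I) (- F i) = - \big[Rplus/R0]_(i : I) F i.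
Proof. apply: (big_ind2 (fun x y => x = - y)) => //; [lra | move=> *; subst; lra]. Qed.

Lemma weighted_pos (c a : I -> R) : (forall j, 0 <= c j) -> 0 < \big[Rplus/R0]_(j : I) c j ->
  (forall j, 0 < a j) -> 0 < \big[Rplus/R0]_(j : I) (c j * a j).
Proof.
move=> c0 cs a0.
case: (classic (exists j, 0 < c j)) => [[j cj]|nc].
  have := @term_le_sum (fun k => c k * a k) j (fun i => Rmult_le_pos _ _ (c0 i) (Rlt_le _ _ (a0 i))).
  have := a0 j; nra.
have : \big[Rplus/R0]_(j : I) c j <= \big[Rplus/R0]_(j : I) (fun _ => 0) j.
  apply: sum_le => j; apply: Rnot_lt_le => h; apply: nc; by exists j.
have -> : \big[Rplus/R0]_(j : I) (fun _ => 0) j = 0 by apply: big1.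
lra.
Qed.

Lemma delta_lemma (f : I -> R) : (forall j, 0 < f j) ->
  exists d, 0 < d /\ forall j, d <= f j.
Proof.
move=> fp; set s := \big[Rplus/R0]_(j : I) / f j.
have hs : forall j, / f j <= s.
  move=> j; apply: term_le_sum => i; apply: Rlt_le; apply: Rinv_0_lt_compat; exact: fp.
have s0 : 0 <= s by apply: sum_ge0 => i; apply: Rlt_le; apply: Rinv_0_lt_compat; exact: fp.
exists (/ (1 + s)); split; first by apply: Rinv_0_lt_compat; lra.
move=> j; have fj := fp j; have := hs j => h.
have e1 : f j * / f j = 1 by field; lra.
have e2 : (1 + s) * / (1 + s) = 1 by field; lra.
have : 0 < / (1 + s) by apply: Rinv_0_lt_compat; lra.
nra.
Qed.

Lemma eta_lemma (p b : I -> R) : (forall j, 0 < p j) ->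
  exists e, 0 < e /\ forall j, 0 < p j + e * b j.
Proof.
move=> pp; set s := \big[Rplus/R0]_(j : I) (Rabs (b j) / p j).
have hs : forall j, Rabs (b j) / p j <= s.
  move=> j; apply: term_le_sum => i; apply: Rmult_le_pos; first exact: Rabs_pos.
  apply: Rlt_le; apply: Rinv_0_lt_compat; exact: pp.
have s0 : 0 <= s by apply: sum_ge0 => i; apply: Rmult_le_pos; [exact: Rabs_pos|
  apply: Rlt_le; apply: Rinv_0_lt_compat; exact: pp].
exists (/ (1 + s)); split; first by apply: Rinv_0_lt_compat; lra.
move=> j; have pj := pp j; have := hs j => h.
have h2 : Rabs (b j) <= s * p j.
  have -> : Rabs (b j) = Rabs (b j) / p j * p j by field; lra.
  nra.
have e2 : (1 + s) * / (1 + s) = 1 by field; lra.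
have : 0 < / (1 + s) by apply: Rinv_0_lt_compat; lra.
have := Rabs_pos (b j); have : - Rabs (b j) <= b j by move: (Rle_abs (- b j)); rewrite Rabs_Ropp; lra.
nra.
Qed.

End Sums.

Definition dot (n : nat) (w v : vec n) : R := \big[Rplus/R0]_(i < n) (w i * v i).

Lemma dot_linl n (w a b : vec n) (x y : R) (v : vec n) :
  (forall i, w i = x * a i + y * b i) -> dot w v = x * dot a v + y * dot b v.
Proof.
move=> H; rewrite /dot !big_distrr -big_split /=; apply: eq_bigr => i _; rewrite H; ring.
Qed.

Lemma dot_linr n (w a b : vec n) (x y : R) (v : vec n) :
  (forall i, v i = x * a i + y * b i) -> dot w v = x * dot w a + y * dot w b.
Proof.
move=> H; rewrite /dot !big_distrr -big_split /=; apply: eq_bigr => i _; rewrite H; ring.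
Qed.

Lemma dot_sq_ge0 n (u : vec n) : 0 <= dot u u.
Proof. apply: sum_ge0 => i; nra. Qed.

Lemma dot_sq_term n (u : vec n) i : u i * u i <= dot u u.
Proof. by apply: (term_le_sum (F := fun i => u i * u i)) => j; nra. Qed.

Lemma dot_sq0 n (u : vec n) : dot u u <= 0 -> forall i, u i = 0.
Proof. move=> H i; have := dot_sq_term u i; nra. Qed.

Lemma dot_conv n (I : finType) (c : I -> R) (p : I -> vec n) (w y : vec n) :
  (forall i, y i = \big[Rplus/R0]_(j : I) (c j * p j i)) ->
  dot w y = \big[Rplus/R0]_(j : I) (c j * dot w (p j)).
Proof.
move=> H; rewrite /dot.
transitivity (\big[Rplus/R0]_(i < n) \big[Rplus/R0]_(j : I) (w i * (c j * p j i))).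
  by apply: eq_bigr => i _; rewrite H big_distrr.
rewrite exchange_big /=; apply: eq_bigr => j _; rewrite big_distrr /=.
apply: eq_bigr => i _; ring.
Qed.

Lemma ord_ext k (c0 : R) (c' : 'I_k -> R) : exists c : 'I_k.+1 -> R,
  c ord0 = c0 /\ (forall j, c (lift ord0 j) = c' j) /\
  (forall P : R -> Prop, P c0 -> (forall j, P (c' j)) -> forall j, P (c j)).
Proof.
exists (fun j => match unlift ord0 j with Some j' => c' j' | None => c0 end).
rewrite unlift_none; split=> //; split=> [j|P H0 H1 j]; first by rewrite liftK.
by case: (unlift ord0 j).
Qed.

Lemma gordan_ord n k (v : 'I_k -> vec n) :
  (exists c : 'I_k -> R, (forall j, 0 <= c j) /\ 0 < \big[Rplus/R0]_(j < k) c j /\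
     forall i, \big[Rplus/R0]_(j < k) (c j * v j i) = 0)
  \/ (exists w : vec n, forall j, 0 < dot w (v j)).
Proof.
elim: k v => [|k IH] v.
  by right; exists (fun _ => 0); case.
set u := v ord0; set V : 'I_k -> vec n := fun j => v (lift ord0 j).
have cases : forall P : 'I_k.+1 -> Prop, P ord0 -> (forall j : 'I_k, P (lift ord0 j)) -> forall j, P j.
  by move=> P H0 H1 j; case: (unliftP ord0 j) => [j'|] ->.
case: (IH V) => [[c' [c'0 [c'pos c'comb]]] | [w' w'pos]].
  left; have [c [co [cl cP]]] := ord_ext 0 c'.
  exists c; split; first by apply: cP => //; lra.
  split.
    rewrite big_ord_recl co.
    have -> : \big[Rplus/R0]_(j < k) c (lift ord0 j) = \big[Rplus/R0]_(j < k) c' j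
      by apply: eq_bigr => j _; rewrite cl.
    lra.
  move=> i; rewrite big_ord_recl co.
  have -> : \big[Rplus/R0]_(j < k) (c (lift ord0 j) * v (lift ord0 j) i) =
     \big[Rplus/R0]_(j < k) (c' j * V j i) by apply: eq_bigr => j _; rewrite cl.
  rewrite c'comb; ring.
case: (Req_dec (dot u u) 0) => [u0|un0].
  have Hu0 := @dot_sq0 _ u (Req_le _ _ u0).
  left; have [c [co [cl cP]]] := ord_ext 1 (fun _ : 'I_k => 0).
  exists c; split; first by apply: cP => [|j]; lra.
  have z : forall F : 'I_k -> R, (forall j, F j = 0) -> \big[Rplus/R0]_(j < k) F j = 0.
    by move=> F HF; apply: big1 => j _; apply: HF.
  split.
    rewrite big_ord_recl co z; [lra | by move=> j; rewrite cl].
  move=> i; rewrite big_ord_recl co z; last by move=> j; rewrite cl; ring.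
  rewrite -/u Hu0; ring.
have upos : 0 < dot u u by have := dot_sq_ge0 u; lra.
case: (Rlt_le_dec 0 (dot w' u)) => [pos | nonpos].
  by right; exists w'; apply: cases.
set a := - dot w' u.
set Q : 'I_k -> vec n := fun j i => dot w' (V j) * u i + a * V j i.
case: (IH Q) => [[lam [lpos [lsum lcomb]]] | [w'' w''pos]].
  left.
  have [c [co [cl cP]]] := ord_ext (\big[Rplus/R0]_(j < k) (lam j * dot w' (V j))) (fun j => a * lam j).
  have c0pos : 0 < \big[Rplus/R0]_(j < k) (lam j * dot w' (V j)).
    by apply: weighted_pos.
  exists c; split.
    apply: cP; first lra. move=> j; have := lpos j; rewrite /a; nra.
  split.
    rewrite big_ord_recl co.
    have -> : \big[Rplus/R0]_(i < k) c (lift ord0 i) = \big[Rplus/R0]_(i < k) (a * lam i)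
      by apply: eq_bigr => j _; rewrite cl.
    rewrite -big_distrr /=.
    have ha : 0 <= a by rewrite /a; lra.
    have := Rmult_le_pos _ _ ha (Rlt_le _ _ lsum). lra'.
  move=> i; rewrite big_ord_recl co.
  have -> : \big[Rplus/R0]_(j < k) (c (lift ord0 j) * v (lift ord0 j) i) =
     \big[Rplus/R0]_(j < k) (a * lam j * V j i) by apply: eq_bigr => j _; rewrite cl.
  rewrite -(lcomb i) big_distrl /= -big_split /=.
  apply: eq_bigr => j _; rewrite /Q /u /=; ring.
right.
set w0 := fun i => a * w'' i + dot w'' u * w' i.
have h0 : dot w0 u = 0.
  rewrite (@dot_linl _ w0 w'' w' a (dot w'' u)) //; rewrite /a; ring.
have hV : forall j, 0 < dot w0 (V j).
  move=> j; have := w''pos j.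
  rewrite (@dot_linl _ w0 w'' w' a (dot w'' u)) //.
  rewrite (@dot_linr _ w'' u (V j) (dot w' (V j)) a (Q j)) //.
  move=> h; nra.
have [e [e0 he]] := eta_lemma (fun j => dot u (V j)) hV.
exists (fun i => 1 * w0 i + e * u i); apply: cases.
  rewrite -/u (@dot_linl _ _ w0 u 1 e) // h0; nra'.
move=> j; rewrite -/(V j) (@dot_linl _ _ w0 u 1 e) //; have := he j; lra'.
Qed.

Lemma gordan_fin n (I : finType) (v : I -> vec n) :
  (exists t : I -> R, (forall m, 0 <= t m) /\ \big[Rplus/R0]_(m : I) t m = 1 /\
     forall i, \big[Rplus/R0]_(m : I) (t m * v m i) = 0)
  \/ (exists w : vec n, forall m, 0 < dot w (v m)).
Proof.
case: (gordan_ord (fun j : 'I_#|I| => v (enum_val j))) => [[c [c0 [cs cc]]] | [w hw]].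
  left; set C := \big[Rplus/R0]_(j < #|I|) c j.
  have Cpos : 0 < C by [].
  have reid : forall F : 'I_#|I| -> R,
      \big[Rplus/R0]_(j < #|I|) F j = \big[Rplus/R0]_(m : I) F (enum_rank m).
    move=> F; rewrite (reindex enum_rank) //; apply: onW_bij; exact: enum_rank_bij.
  exists (fun m => c (enum_rank m) / C); split.
    move=> m; apply: Rmult_le_pos => //; apply: Rlt_le; apply: Rinv_0_lt_compat; lra.
  split.
    rewrite -(reid (fun j => c j / C)) -big_distrl /= -/C; field; lra.
  move=> i.
  transitivity ((\big[Rplus/R0]_(j < #|I|) (c j * v (enum_val j) i)) / C).
    rewrite /Rdiv big_distrl (reid (fun j => c j * v (enum_val j) i * / C)) /=.
    apply: eq_bigr => m _; rewrite enum_rankK; field; lra.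
  rewrite cc; field; lra.
right; exists w => m; have := hw (enum_rank m); by rewrite enum_rankK.
Qed.

Lemma abs_conv (I : finType) (c a : I -> R) (B : R) :
  (forall j, 0 <= c j) -> \big[Rplus/R0]_(j : I) c j = 1 -> (forall j, Rabs (a j) <= B) ->
  Rabs (\big[Rplus/R0]_(j : I) (c j * a j)) <= B.
Proof.
move=> c0 cs ha; apply: Rabs_le; split.
  have -> : - B = \big[Rplus/R0]_(j : I) (c j * - B) by rewrite -big_distrl /= cs; ring.
  apply: sum_le => j; have := c0 j.
  have : - B <= a j by move: (Rle_abs (- a j)); rewrite Rabs_Ropp; move: (ha j); lra.
  nra.
have -> : B = \big[Rplus/R0]_(j : I) (c j * B) by rewrite -big_distrl /= cs; ring.
apply: sum_le => j; have := c0 j; have : a j <= B by move: (Rle_abs (a j)) (ha j); lra.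
nra.
Qed.

Lemma sumR_recr k (F : nat -> R) :
  \big[Rplus/R0]_(i < k.+1) F i = \big[Rplus/R0]_(i < k) F i + F k.
Proof. by rewrite big_ord_recr. Qed.

Section Game.
Variables (M : finType) (n : nat).

Lemma foldr_add (rs : seq (round M n)) (z : R) i :
  foldr (fun (rd : round M n) acc => rd.1.2 * rd.2 i + acc) z rs =
  foldr (fun (rd : round M n) acc => rd.1.2 * rd.2 i + acc) R0 rs + z.
Proof. elim: rs => [|rd rs IH] /=; first ring. rewrite IH; ring. Qed.

Lemma pos_rcons (x0 : vec n) rs (rd : round M n) i :
  Defs.pos x0 (rcons rs rd) i = Defs.pos x0 rs i + rd.1.2 * rd.2 i.
Proof. rewrite /Defs.pos foldr_rcons foldr_add; ring. Qed.

Lemma run_pos_S (x0 : vec n) sg (en : env_strategy M n) k i :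
  run_pos x0 sg en k.+1 i =
  run_pos x0 sg en k i + (next_round x0 sg en k).1.2 * (next_round x0 sg en k).2 i.
Proof. by rewrite /run_pos /= pos_rcons. Qed.

Lemma run_pos_0 (x0 : vec n) sg (en : env_strategy M n) i : run_pos x0 sg en 0 i = x0 i.
Proof. rewrite /run_pos /Defs.pos /=; ring. Qed.

Lemma size_run_rounds (x0 : vec n) sg (en : env_strategy M n) k :
  size (run_rounds x0 sg en k) = k.
Proof. by elim: k => [|k IH] //=; rewrite size_rcons IH. Qed.

End Game.

Lemma win_safe (M : finType) (n : nat) (Rates : M -> vec n -> Prop) (S : vec n -> Prop) (x0 : vec n) :
  is_polytope S -> in_interior S x0 ->
  (exists sg : sched_strategy M n, winning Rates S x0 sg) -> safe_MMS Rates.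
Proof.
move=> [k [p [kpos HS]]] [eps [eps0 Hint]] [sg [vs Hw]] Rc HRc.
case: (gordan_fin Rc) => [[t [t0 [ts tc]]] | [w hw]]; first by exists t.
exfalso.
have [d [d0 hd]] := @delta_lemma _ (fun m => dot w (Rc m)) hw.
pose en : env_strategy M n := fun _ m _ => Rc m.
have ven : valid_env Rates en by move=> h m t; exact: (HRc m).1.
have [Ssafe NZ] := Hw en ven.
pose B := \big[Rplus/R0]_(j < k) Rabs (dot w (p j)).
have bnd : forall y, S y -> Rabs (dot w y) <= B.
  move=> y /HS [c [c0 [cs cy]]]; rewrite (dot_conv w cy).
  apply: abs_conv => // j.
  exact: (@term_le_sum _ (fun j => Rabs (dot w (p j))) j (fun i => Rabs_pos _)).
have inc : forall kk, d * \big[Rplus/R0]_(i < kk) (next_round x0 sg en i).1.2 <=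
    dot w (run_pos x0 sg en kk) - dot w x0.
  elim=> [|kk IH].
    rewrite big_ord0.
    have -> : dot w (run_pos x0 sg en 0) = dot w x0.
      by apply: eq_bigr => i _; rewrite run_pos_0.
    lra.
  rewrite (sumR_recr _ (fun i => (next_round x0 sg en i).1.2)).
  rewrite (@dot_linr _ w (run_pos x0 sg en kk) (next_round x0 sg en kk).2 1
     (next_round x0 sg en kk).1.2 (run_pos x0 sg en kk.+1)); last first.
    by move=> i; rewrite run_pos_S; ring.
  have tpos : 0 < (next_round x0 sg en kk).1.2 by apply: vs.
  have hr : d <= dot w (next_round x0 sg en kk).2 by apply: hd.
  move: IH tpos hr.
  set T := \big[Rplus/R0]_(i < kk) (next_round x0 sg en i).1.2.
  set tk := (next_round x0 sg en kk).1.2.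
  set rk := dot w (next_round x0 sg en kk).2.
  nra.
have x0S : S x0 by apply: Hint => i; rewrite Rminus_diag Rabs_R0.
have [kk hk] := NZ (2 * B / d).
have xkS := (Ssafe kk).1.
have := bnd _ x0S; have := bnd _ xkS; have := inc kk.
move: hk.
set T := \big[Rplus/R0]_(i < kk) (next_round x0 sg en i).1.2.
set a1 := dot w x0; set a2 := dot w (run_pos x0 sg en kk).
move=> hk h1 h2 h3.
have e : 2 * B / d * d = 2 * B by field; lra.
move: (Rle_abs a1) (Rle_abs a2) (Rle_abs (- a1)); rewrite Rabs_Ropp => *.
nra.
Qed.

Lemma argmax (I : finType) (f : I -> R) (i0 : I) : exists j, forall i, f i <= f j.
Proof.
have : forall s : seq I, exists j, forall i, i \in s -> f i <= f j.
  elim=> [|x s [j IH]]; first by exists i0.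
  case: (Rle_lt_dec (f x) (f j)) => h.
    exists j => i; rewrite in_cons => /orP [/eqP -> // | /IH //].
  exists x => i; rewrite in_cons => /orP [/eqP -> | /IH]; lra'.
move/(_ (enum I)) => [j H]; exists j => i; apply: H; by rewrite mem_enum.
Qed.

Lemma jensen1 (I : finType) (c a : I -> R) :
  (forall j, 0 <= c j) -> \big[Rplus/R0]_(j : I) c j = 1 ->
  \big[Rplus/R0]_(j : I) (c j * a j) * \big[Rplus/R0]_(j : I) (c j * a j)
    <= \big[Rplus/R0]_(j : I) (c j * (a j * a j)).
Proof.
move=> c0 cs; set y := \big[Rplus/R0]_(j : I) (c j * a j).
have h0 : 0 <= \big[Rplus/R0]_(j : I) (c j * ((a j - y) * (a j - y))).
  apply: sum_ge0 => j; apply: Rmult_le_pos => //; exact: Rle_0_sqr.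
have E : \big[Rplus/R0]_(j : I) (c j * ((a j - y) * (a j - y))) =
   \big[Rplus/R0]_(j : I) (c j * (a j * a j)) + (-2 * y) * y + (y * y) * \big[Rplus/R0]_(j : I) c j.
  rewrite {4}/y (big_distrr (-2 * y)) (big_distrr (y * y)) -!big_split /=.
  apply: eq_bigr => j _; ring.
rewrite cs in E; rewrite E in h0; lra'.
Qed.

Lemma jensen n k (c : 'I_k -> R) (p : 'I_k -> vec n) (y : vec n) :
  (forall j, 0 <= c j) -> \big[Rplus/R0]_(j < k) c j = 1 ->
  (forall i, y i = \big[Rplus/R0]_(j < k) (c j * p j i)) ->
  dot y y <= \big[Rplus/R0]_(j < k) (c j * dot (p j) (p j)).
Proof.
move=> c0 cs hy.
apply: (@Rle_trans _ (\big[Rplus/R0]_(i < n) \big[Rplus/R0]_(j < k) (c j * (p j i * p j i)))).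
  apply: sum_le => i; rewrite hy; exact: jensen1.
rewrite exchange_big /=; apply: Req_le; apply: eq_bigr => j _.
rewrite /dot big_distrr /=; apply: eq_bigr => i _; ring.
Qed.

Lemma dot_comb n (y z v : vec n) (l : R) :
  (forall i, v i = l * y i + (1 - l) * z i) ->
  dot v v = l * dot y y + (1 - l) * dot z z
     - l * (1 - l) * dot (fun i => y i - z i) (fun i => y i - z i).
Proof.
move=> H; rewrite /dot.
rewrite (big_distrr l) (big_distrr (1 - l)) (big_distrr (l * (1 - l))) /=.
have -> : forall a b c : R, a + b - c = a + b + (- c) by move=> *; ring.
rewrite -sum_opp -!big_split /=; apply: eq_bigr => i _; rewrite H; ring.
Qed.

Lemma exists_vertex n (P : vec n -> Prop) (d : vec n) : is_polytope P ->
  (exists r, P r /\ 0 < dot d r) -> exists v, is_vertex P v /\ 0 < dot d v.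
Proof.
move=> [k [p [kpos HP]]] [r [Pr dr]].
have [c [c0 [cs cr]]] := (HP r).1 Pr.
have [j0 hj0] : exists j0, 0 < dot d (p j0).
  apply: NNPP => hn.
  have : \big[Rplus/R0]_(j < k) (c j * dot d (p j)) <= \big[Rplus/R0]_(j < k) (c j * 0).
    apply: sum_le => j; apply: Rmult_le_compat_l => //; apply: Rnot_lt_le => h; apply: hn; by exists j.
  rewrite -(dot_conv d cr) big1 /=; [lra' | move=> j _; ring].
set al := dot d (p j0).
have al0 : 0 < al := hj0.
set s := \big[Rplus/R0]_(j < k) dot (p j) (p j).
have s0 : 0 <= s by apply: sum_ge0 => j; exact: dot_sq_ge0.
set e := al / (1 + s).
have e0 : 0 < e by apply: Rdiv_lt_0_compat; lra'.
have ep : forall j, e * dot (p j) (p j) < al.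
  move=> j; have := @term_le_sum _ (fun j => dot (p j) (p j)) j (fun i => dot_sq_ge0 _).
  rewrite -/s => h; have := dot_sq_ge0 (p j).
  have : e * (1 + s) = al by rewrite /e; field; lra'.
  nra'.
pose psi (y : vec n) := dot d y + e * dot y y.
have [j1 hj1] := argmax (fun j => psi (p j)) j0.
set v := p j1.
have psi_max : forall y, P y -> psi y <= psi v.
  move=> y /HP [c' [c'0 [c's c'y]]].
  rewrite {1}/psi (dot_conv d c'y).
  have := jensen c'0 c's c'y.
  have : \big[Rplus/R0]_(j < k) (c' j * dot d (p j)) + e * \big[Rplus/R0]_(j < k) (c' j * dot (p j) (p j))
     <= psi v.
    rewrite big_distrr -big_split /=.
    have -> : psi v = \big[Rplus/R0]_(j < k) (c' j * psi v) by rewrite -big_distrl /= c's; ring.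
    apply: sum_le => j; have := hj1 j; have := c'0 j; rewrite /psi /v; nra'.
  nra'.
have Pv : P v.
  apply/HP; exists (fun j => if j == j1 then 1 else 0); split; first by move=> j; case: (j == j1); lra'.
  split.
    rewrite (bigD1 j1) //= eqxx big1; first ring.
    by move=> j /negbTE ->.
  move=> i; rewrite (bigD1 j1) //= eqxx big1; first by rewrite /v; ring.
  by move=> j /negbTE ->; ring.
exists v; split; last first.
  have := hj1 j0; have := ep j1; have := dot_sq_ge0 (p j0); rewrite /psi -/v -/al; nra'.
split=> // y z l Py Pz hl hv.
have hy := psi_max y Py; have hz := psi_max z Pz.
have E := dot_comb hv.
have Ed : dot d v = l * dot d y + (1 - l) * dot d z.
  by apply: dot_linr.
have hq : dot (fun i => y i - z i) (fun i => y i - z i) <= 0.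
  move: hy hz; rewrite /psi Ed E.
  have : 0 <= dot (fun i => y i - z i) (fun i => y i - z i) := dot_sq_ge0 _.
  set q := dot (fun i => y i - z i) (fun i => y i - z i).
  set Y := dot y y; set Z := dot z z; set dy := dot d y; set dz := dot d z.
  case: hl => hl1 hl2 q0 hy hz.
  have h1 := Rmult_le_compat_l l _ _ (Rlt_le _ _ hl1) hy.
  have h2 := Rmult_le_compat_l (1 - l) _ _ (ltac:(lra)) hz.
  have : 0 < l * (1 - l) * e by apply: Rmult_lt_0_compat => //; apply: Rmult_lt_0_compat; lra.
  move=> hp.
  have : l * (1 - l) * e * q <= 0 by lra.
  move=> h3; apply: Rnot_lt_le => h4.
  have := Rmult_lt_0_compat _ _ hp h4; lra.
move=> i; have := dot_sq0 hq i; lra'.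
Qed.

Lemma mode_exists (M : finType) n (Rates : M -> vec n -> Prop) :
  is_BMS Rates -> safe_MMS Rates ->
  forall d : vec n, exists m : M, forall r, Rates m r -> dot d r <= 0.
Proof.
move=> [_ [_ HP]] Hs d; apply: NNPP => hn.
have hv : forall m, exists v, is_vertex (Rates m) v /\ 0 < dot d v.
  move=> m; apply: exists_vertex => //; apply: NNPP => h2; apply: hn; exists m => r Hr.
  apply: Rnot_lt_le => h3; apply: h2; by exists r.
pose Rc m := proj1_sig (constructive_indefinite_description _ (hv m)).
have HRc : forall m, is_vertex (Rates m) (Rc m) /\ 0 < dot d (Rc m) :=
  fun m => proj2_sig (constructive_indefinite_description _ (hv m)).
have [t [t0 [ts tc]]] := Hs Rc (fun m => (HRc m).1).
have := @weighted_pos _ t (fun m => dot d (Rc m)) t0 (ltac:(rewrite ts; lra)) (fun m => (HRc m).2).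
rewrite -(@dot_conv _ _ t Rc d (fun i => \big[Rplus/R0]_(m : M) (t m * Rc m i))) //.
have -> : dot d (fun i => \big[Rplus/R0]_(m : M) (t m * Rc m i)) = 0.
  by rewrite /dot big1 // => i _; rewrite tc; ring.
lra.
Qed.

Lemma rate_bound (M : finType) n (Rates : M -> vec n -> Prop) :
  is_BMS Rates -> exists K, 0 <= K /\ forall m r, Rates m r -> dot r r <= K.
Proof.
move=> [_ [_ HP]].
have hK : forall m, exists K, 0 <= K /\ forall r, Rates m r -> dot r r <= K.
  move=> m; have [k [p [_ HPm]]] := HP m.
  exists (\big[Rplus/R0]_(j < k) dot (p j) (p j)); split.
    by apply: sum_ge0 => j; exact: dot_sq_ge0.
  move=> r /HPm [c [c0 [cs cr]]].
  apply: Rle_trans (jensen c0 cs cr) _.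
  apply: sum_le => j.
  have : c j <= 1 by rewrite -cs; exact: (@term_le_sum _ c j c0).
  have := dot_sq_ge0 (p j); have := c0 j; nra.
pose Kf m := proj1_sig (constructive_indefinite_description _ (hK m)).
have HKf : forall m, 0 <= Kf m /\ forall r, Rates m r -> dot r r <= Kf m :=
  fun m => proj2_sig (constructive_indefinite_description _ (hK m)).
exists (\big[Rplus/R0]_(m : M) Kf m); split.
  by apply: sum_ge0 => m; exact: (HKf m).1.
move=> m r Hr; apply: Rle_trans ((HKf m).2 r Hr) _.
exact: (@term_le_sum _ Kf m (fun m => (HKf m).1)).
Qed.

Lemma sq_step n (d r z : vec n) (t K : R) :
  dot d r <= 0 -> 0 <= t -> dot r r <= K -> (forall i, z i = d i + t * r i) ->
  dot z z <= dot d d + t * t * K.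
Proof.
move=> h1 h2 h3 hz.
have -> : dot z z = dot d d + 2 * t * dot d r + t * t * dot r r.
  rewrite /dot (big_distrr (2 * t)) (big_distrr (t * t)) -!big_split /=.
  apply: eq_bigr => i _; rewrite hz; ring.
have : 0 <= t * t by nra.
have : 2 * t * dot d r <= 0 by nra.
move=> a b; have : t * t * dot r r <= t * t * K by apply: Rmult_le_compat_l.
lra.
Qed.

Lemma ln_step a : 0 < a -> ln (a + 1) - ln a <= / a.
Proof.
move=> a0.
have -> : a + 1 = a * (1 + / a) by field; lra.
have ia : 0 < / a by apply: Rinv_0_lt_compat.
rewrite ln_mult //; last lra.
have h := exp_ineq1 (/ a) (Rgt_not_eq _ _ ia).
have := ln_increasing (1 + / a) (exp (/ a)) (ltac:(lra)) h; rewrite ln_exp; lra.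
Qed.

Lemma harm k : ln (INR k + 2) - ln 2 <= \big[Rplus/R0]_(i < k) / (INR i + 2).
Proof.
elim: k => [|k IH].
  rewrite big_ord0 /=; have -> : 0 + 2 = 2 by ring. lra.
rewrite (sumR_recr _ (fun i => / (INR i + 2))) S_INR.
have := pos_INR k => hk.
have := @ln_step (INR k + 2) (ltac:(lra)).
have -> : INR k + 2 + 1 = INR k + 1 + 2 by ring.
lra.
Qed.

Lemma arith1 x : 0 <= x -> (1 - / (x + 1)) + / (x + 2) * / (x + 2) <= 1 - / (x + 1 + 1).
Proof.
move=> x0.
have -> : x + 1 + 1 = x + 2 by ring.
have e : / (x + 1) - / (x + 2) - / (x + 2) * / (x + 2) = / ((x + 1) * (x + 2) * (x + 2)).
  field; lra.
have : 0 < / ((x + 1) * (x + 2) * (x + 2)).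
  apply: Rinv_0_lt_compat; apply: Rmult_lt_0_compat; [apply: Rmult_lt_0_compat|]; lra.
lra.
Qed.

Lemma safe_win (M : finType) (n : nat) (Rates : M -> vec n -> Prop) (S : vec n -> Prop) (x0 : vec n) :
  is_BMS Rates -> in_interior S x0 -> safe_MMS Rates ->
  exists sg : sched_strategy M n, winning Rates S x0 sg.
Proof.
move=> HB [eps [eps0 Hint]] Hs.
have hm := mode_exists HB Hs.
pose mode (d : vec n) := proj1_sig (constructive_indefinite_description _ (hm d)).
have hmode : forall d r, Rates (mode d) r -> dot d r <= 0 :=
  fun d => proj2_sig (constructive_indefinite_description _ (hm d)).
have [K [K0 HK]] := rate_bound HB.
pose c := eps / (1 + K).
have c0 : 0 < c by apply: Rdiv_lt_0_compat; lra.
have cK : c * (1 + K) = eps by rewrite /c; field; lra.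
have Kc : K * c * c < eps * eps.
  rewrite -cK; have : 0 < c * c by nra.
  nra.
pose sg : sched_strategy M n :=
  fun h => (mode (fun i => Defs.pos x0 h.2 i - x0 i), c / (INR (size h.2) + 2)).
have inS : forall y, dot (fun i => y i - x0 i) (fun i => y i - x0 i) <= K * c * c -> S y.
  move=> y hy; apply: Hint => i.
  have := dot_sq_term (fun i => y i - x0 i) i; rewrite /= => h.
  apply: Rabs_def1; nra.
exists sg; split.
  move=> h; rewrite /sg /=; apply: Rdiv_lt_0_compat => //; have := pos_INR (size h.2); lra.
move=> en ven.
have tk : forall k, (next_round x0 sg en k).1.2 = c / (INR k + 2).
  by move=> k; rewrite /next_round /sg /= size_run_rounds.
have tk0 : forall k, 0 <= (next_round x0 sg en k).1.2.
  move=> k; rewrite tk; apply: Rlt_le; apply: Rdiv_lt_0_compat => //; have := pos_INR k; lra.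
have rk : forall k, dot (fun i => run_pos x0 sg en k i - x0 i) (next_round x0 sg en k).2 <= 0.
  move=> k; apply: hmode; exact: ven.
have rK : forall k, dot (next_round x0 sg en k).2 (next_round x0 sg en k).2 <= K.
  move=> k; apply: (HK (next_round x0 sg en k).1.1); exact: ven.
pose D k := fun i => run_pos x0 sg en k i - x0 i.
have inv : forall k, dot (D k) (D k) <= K * c * c * (1 - / (INR k + 1)).
  elim=> [|k IH].
    have -> : dot (D 0%N) (D 0%N) = 0.
      by rewrite /dot big1 // => i _; rewrite /D run_pos_0; ring.
    rewrite /= Rplus_0_l Rinv_1; lra.
  have h := @sq_step _ (D k) (next_round x0 sg en k).2 (D k.+1) _ _ (rk k) (tk0 k) (rK k).
  have h' : dot (D k.+1) (D k.+1) <= dot (D k) (D k) + (next_round x0 sg en k).1.2 * (next_round x0 sg en k).1.2 * K.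
    by apply: h => i; rewrite /D run_pos_S; ring.
  rewrite tk in h'; rewrite S_INR.
  have x0' := pos_INR k.
  have a1 := arith1 x0'.
  have e : c / (INR k + 2) * (c / (INR k + 2)) * K = K * c * c * (/ (INR k + 2) * / (INR k + 2)).
    by field; lra.
  rewrite e in h'.
  have : 0 <= K * c * c by apply: Rmult_le_pos; [apply: Rmult_le_pos|]; lra.
  move=> kc; have := Rmult_le_compat_l _ _ _ kc a1.
  lra.
have bnd : forall k t z, 0 <= t <= (next_round x0 sg en k).1.2 ->
    (forall j, z j = D k j + t * (next_round x0 sg en k).2 j) -> dot z z <= K * c * c.
  move=> k t z [t0 t1] hz.
  have h := @sq_step _ (D k) (next_round x0 sg en k).2 z t K (rk k) t0 (rK k) hz.
  move: t1; rewrite tk => t1.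
  have x0' := pos_INR k.
  have a1 := arith1 x0'.
  have hk := inv k.
  have tt : t * t <= c / (INR k + 2) * (c / (INR k + 2)) by apply: Rmult_le_compat.
  have e : c / (INR k + 2) * (c / (INR k + 2)) * K = K * c * c * (/ (INR k + 2) * / (INR k + 2)).
    by field; lra.
  have : t * t * K <= c / (INR k + 2) * (c / (INR k + 2)) * K by apply: Rmult_le_compat_r.
  rewrite e => h2.
  have : 0 <= K * c * c by apply: Rmult_le_pos; [apply: Rmult_le_pos|]; lra.
  move=> kc; have := Rmult_le_compat_l _ _ _ kc a1.
  have : 0 <= / (INR k + 1 + 1) by apply: Rlt_le; apply: Rinv_0_lt_compat; lra.
  move=> h3 h4; have : 0 <= K * c * c * / (INR k + 1 + 1) by apply: Rmult_le_pos.
  lra.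
split.
  move=> i; split.
    apply: inS; apply: (@bnd i 0) => [|j]; first by split; [lra | exact: tk0].
    rewrite /D; ring.
  move=> t ht; apply: inS; apply: (bnd i t) => // j; rewrite /D; ring.
move=> B.
have [k hk] := INR_archimed 1 (exp (B / c + ln 2)) (ltac:(lra)).
exists k.
have -> : \big[Rplus/R0]_(i < k) (next_round x0 sg en i).1.2 =
    c * \big[Rplus/R0]_(i < k) / (INR i + 2).
  rewrite big_distrr; apply: eq_bigr => i _; rewrite tk; reflexivity.
have hl := harm k.
have ex0 := exp_pos (B / c + ln 2).
have := ln_increasing _ (INR k + 2) ex0 (ltac:(lra)); rewrite ln_exp => hl2.
have : B / c < \big[Rplus/R0]_(i < k) / (INR i + 2) by lra.
move=> h; have := Rmult_lt_compat_l c _ _ c0 h.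
have -> : c * (B / c) = B by field; lra.
lra.
Qed.

Unset Implicit Arguments.
Set Strict Implicit.

Theorem theorem3 (M : finType) (n : nat) (Rates : M -> vec n -> Prop)
  (S : vec n -> Prop) (x0 : vec n) :
  is_BMS Rates -> is_polytope S -> in_interior S x0 ->
  ((exists sg : sched_strategy M n, winning Rates S x0 sg) <-> safe_MMS Rates).
Proof.
move=> HB HP HI; split; first exact: win_safe.
exact: safe_win.
Qed.
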